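(* Let $f:\{0,1\}^N\to\{0,1\}$ be a non-constant boolean function. Then $s(f)\ge C(\deg(f))$.
   Context: For a boolean function $f$ on $N$ variables and $\mathbf{x}\in\{0,1\}^N$, the sensitivity $s_{\mathbf{x}}(f)$ is the number of coordinates $\ell$ such that flipping the $\ell$-th bit of $\mathbf{x}$ changes the value of $f$; the sensitivity of $f$ is $s(f)=\max_{\mathbf{x}} s_{\mathbf{x}}(f)$. The degree $\deg(f)$ is the smallest degree of a real polynomial in $x_1,\dots,x_N$ agreeing with $f$ on $\{0,1\}^N$. The game $G_n$ ($n$ a positive integer): Alice receives, as a stream, a permutation $\sigma=(\sigma_1,\dots,\sigma_n)$ of $[n]=\{1,\dots,n\}$ followed by a bit $b\in\{0,1\}$. She has an array $\mathbf{v}=(v_1,\dots,v_n)$ whose cells are initially empty. For each $i<n$, upon receiving $\sigma_i$ she writes a bit in cell $\sigma_i$; this bit may depend on everything she has received so far ($\sigma_1,\dots,\sigma_i$), and once written it cannot be changed. Upon receiving $\sigma_n$ and $b$ she writes $b$ in cell $\sigma_n$. Bob receives the completed array $\mathbf{v}\in\{0,1\}^n$ and outputs a set $J\subseteq[n]$, as a function of $\mathbf{v}$. A protocol (Alice's writing rule together with Bob's output map) is valid if $\sigma_n\in J$ for every $\sigma$ and $b$. Its cost is the maximum of $|J|$ over all $\sigma,b$. $C(n)$ denotes the minimum cost of a valid protocol for $G_n$. *)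

(* Defs.v *)
From HB Require Import structures.
From mathcomp Require Import all_boot all_order all_algebra all_fingroup.
From mathcomp Require Import mpoly.
From mathcomp Require Import Rstruct.
From Stdlib Require Import ClassicalEpsilon.
From Stdlib Require Rdefinitions.
Notation R := Rdefinitions.R.

Set Implicit Arguments.
Unset Strict Implicit.
Unset Printing Implicit Defensive.

Import GRing.Theory.
Local Open Scope ring_scope.

(* The boolean cube {0,1}^N, with bits 0/1 represented by false/true. *)
Definition cube (N : nat) := {ffun 'I_N -> bool}.

Definition flip (N : nat) (x : cube N) (l : 'I_N) : cube N :=
  [ffun j => if j == l then ~~ x j else x j].

Definition sens_at (N : nat) (f : cube N -> bool) (x : cube N) : nat :=
  #|[set l : 'I_N | f (flip x l) != f x]|.

Definition sensitivity (N : nat) (f : cube N -> bool) : nat :=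
  \max_(x : cube N) sens_at f x.

Definition agrees (N : nat) (p : {mpoly R[N]}) (f : cube N -> bool) : Prop :=
  forall x : cube N, p.@[fun i => ((x i : nat)%:R : R)] = ((f x : nat)%:R : R).

(* "there is a real polynomial of (total) degree <= d agreeing with f";
   msize p = 1 + total degree of p (0 for p = 0). *)
Definition deg_le (N : nat) (f : cube N -> bool) (d : nat) : Prop :=
  exists p : {mpoly R[N]}, (msize p <= d.+1)%N /\ agrees p f.

Definition classical_pred (P : nat -> Prop) : pred nat :=
  fun m => if excluded_middle_informative (P m) then true else false.

(* least m with P m (0 if there is none; never used in that case below) *)
Definition least (P : nat -> Prop) : nat :=
  match excluded_middle_informative (exists m, classical_pred P m) with
  | left H => ex_minn H
  | right _ => 0%N
  end.

Definition degree (N : nat) (f : cube N -> bool) : nat := least (deg_le f).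

(* Alice's writing rule: given the stream received so far
   (sigma_1, ..., sigma_i), the bit she writes in cell sigma_i. *)
Definition alice_rule (n : nat) := seq 'I_n -> bool.
Definition bob_rule (n : nat) := cube n -> {set 'I_n}.

Definition stream (n : nat) (s : {perm 'I_n}) : seq 'I_n :=
  [seq s i | i <- enum 'I_n].

(* The completed array v: cell c = sigma_{k+1} (0-indexed position k) gets
   A(sigma_1..sigma_{k+1}) if k < n-1, and b if c = sigma_n. *)
Definition array (n : nat) (A : alice_rule n) (s : {perm 'I_n}) (b : bool)
  : cube n :=
  [ffun c => let k := val ((s^-1)%g c) in
             if k == n.-1 then b else A (take k.+1 (stream s))].

Definition valid (n : nat) (A : alice_rule n) (B : bob_rule n) : Prop :=
  forall (s : {perm 'I_n}) (b : bool) (i : 'I_n),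
    val i = n.-1 -> s i \in B (array A s b).

Definition cost (n : nat) (A : alice_rule n) (B : bob_rule n) : nat :=
  \max_(s : {perm 'I_n}) \max_(b : bool) #|B (array A s b)|.

Definition Cgame (n : nat) : nat :=
  least (fun m => exists (A : alice_rule n) (B : bob_rule n),
                    valid A B /\ cost A B = m).

(* Main.v *)
Require Import Defs.
From mathcomp Require Import all_boot all_algebra.
From HB Require Import structures.
From mathcomp Require Import all_boot all_order all_algebra all_fingroup.
From mathcomp Require Import mpoly Rstruct.
From Stdlib Require Import ClassicalEpsilon.
From mathcomp Require Import zify.
Set Implicit Arguments.
Unset Strict Implicit.
Unset Printing Implicit Defensive.
Import GRing.Theory.
Local Open Scope ring_scope.


Section Comb.
Variable N : nat.
Variable f : cube N -> bool.

Definition upd (z : cube N) (j : 'I_N) (b : bool) : cube N :=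
  [ffun i => if i == j then b else z i].
Definition ow (F y : {set 'I_N}) (z : cube N) : cube N :=
  [ffun i => if i \in F then i \in y else z i].
Definition fr (x : cube N) : R := ((f x : nat)%:R : R).
Definition D (F : {set 'I_N}) (z : cube N) : R :=
  \sum_(y : {set 'I_N} | y \subset F) (-1) ^+ #|F :\: y| * fr (ow F y z).

Lemma split_sub (G : {set 'I_N} -> R) (S : {set 'I_N}) j : j \in S ->
  \sum_(T : {set 'I_N} | T \subset S) G T =
  \sum_(T : {set 'I_N} | T \subset S :\ j) G (j |: T) + \sum_(T : {set 'I_N} | T \subset S :\ j) G T.
Proof.
move=> jS; rewrite (bigID [pred T : {set 'I_N} | j \in T]) /=; congr (_ + _); last first.
  by apply: eq_bigl => T; rewrite subsetD1.
rewrite (reindex_onto (fun T => j |: T) (fun T => T :\ j)) /=; last first.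
  by move=> T /andP[_ jT]; rewrite setD1K.
apply: eq_bigl => T; rewrite setU11 andbT subsetD1 subUset sub1set jS /=.
apply/idP/idP.
  move=> /andP[-> /eqP <-]; by rewrite !inE eqxx.
move=> /andP[TS jT]; rewrite TS /=; apply/eqP/setP => i; rewrite !inE.
by case: (eqVneq i j) => [->|//]; rewrite (negbTE jT).
Qed.

Lemma D_split (F : {set 'I_N}) (z : cube N) (j : 'I_N) : j \in F ->
  D F z = D (F :\ j) (upd z j true) - D (F :\ j) (upd z j false).
Proof.
move=> jF; rewrite /D (split_sub _ jF) /=; congr (_ + _).
  apply: eq_bigr => y yF; congr (_ * fr _).
    congr (_ ^+ _); apply: eq_card => i; rewrite !inE.
    by case: (i == j); case: (i \in y).
  apply/ffunP => i; rewrite !ffunE !inE.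
  by case: (eqVneq i j) => [->|]; rewrite ?jF.
rewrite -sumrN; apply: eq_bigr => y yF.
have jy : j \notin y by move: yF; rewrite subsetD1 => /andP[].
have -> : #|F :\: y| = #|(F :\ j) :\: y|.+1.
  have -> : F :\: y = j |: ((F :\ j) :\: y).
    apply/setP => i; rewrite !inE; case: (eqVneq i j) => [->|] //=.
    by rewrite jF (negbTE jy).
  by rewrite cardsU1 !inE eqxx andbF.
rewrite exprS mulN1r mulNr; congr (- (_ * fr _)).
apply/ffunP => i; rewrite !ffunE !inE.
by case: (eqVneq i j) => [->|] //=; rewrite (negbTE jy) jF.
Qed.

Lemma D0 (z : cube N) : D set0 z = fr z.
Proof.
rewrite /D (big_pred1 set0) => [|y]; last by rewrite subset0.
rewrite setD0 cards0 expr0 mul1r; congr fr; apply/ffunP => i.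
by rewrite !ffunE inE.
Qed.

Lemma D1 (z : cube N) (j : 'I_N) : D [set j] z = fr (upd z j true) - fr (upd z j false).
Proof. by rewrite (D_split _ (set11 j)) setDv !D0. Qed.


Lemma updF (z : cube N) j : z j = false -> upd z j false = z.
Proof. by move=> zj; apply/ffunP => i; rewrite ffunE; case: eqVneq => // ->. Qed.

Lemma mobius n : forall (S : {set 'I_N}), #|S| = n -> forall z : cube N,
  (forall j, j \in S -> z j = false) ->
  \sum_(T : {set 'I_N} | T \subset S) D T z = fr (ow S S z).
Proof.
elim: n => [|n IH] S cS z zS.
  have S0 : S = set0 by apply/eqP; rewrite -cards_eq0 cS.
  subst S; rewrite (big_pred1 set0) => [|y]; last by rewrite subset0.
  rewrite D0; congr fr; apply/ffunP => i; by rewrite !ffunE inE.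
have [j jS] : exists j, j \in S.
  by apply/set0Pn; rewrite -cards_eq0 cS.
rewrite (split_sub _ jS).
have -> : \sum_(T : {set 'I_N} | T \subset S :\ j) D (j |: T) z =
   \sum_(T : {set 'I_N} | T \subset S :\ j) (D T (upd z j true) - D T z).
  apply: eq_bigr => T TS; have jT : j \notin T.
    by move: TS; rewrite subsetD1 => /andP[].
  by rewrite (@D_split (j |: T) z j (setU11 j T)) setU1K // updF // zS.
rewrite sumrB subrK IH.
- congr fr; apply/ffunP => i; rewrite !ffunE !inE.
  by case: (eqVneq i j) => [->|] //=; rewrite jS.
- by move: cS; rewrite (cardsD1 j S) jS add1n => -[].
move=> i; rewrite !inE ffunE => /andP[/negbTE -> iS]; exact: zS.
Qed.

Lemma reduce n : forall (F : {set 'I_N}) (z : cube N) k, #|F| = n -> (k <= n)%N ->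
  D F z != 0 -> exists (F' : {set 'I_N}) (z' : cube N), #|F'| = k /\ D F' z' != 0.
Proof.
elim: n => [|n IH] F z k cF kn DF.
  by exists F, z; move: kn; rewrite leqn0 cF => /eqP ->.
case: (ltngtP k n.+1) kn => // [kn _|-> _]; last by exists F, z.
have [j jF] : exists j, j \in F.
  by apply/set0Pn; rewrite -cards_eq0 cF.
have cF' : #|F :\ j| = n by move: cF; rewrite (cardsD1 j F) jF add1n => -[].
move: DF; rewrite (@D_split F z j jF) => DF.
case: (eqVneq (D (F :\ j) (upd z j true)) 0) => [E|H]; last first.
  exact: (IH _ _ _ cF' kn H).
case: (eqVneq (D (F :\ j) (upd z j false)) 0) => [E'|H].
  by move: DF; rewrite E E' subr0 eqxx.
exact: (IH _ _ _ cF' kn H).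
Qed.


Definition z0 : cube N := [ffun _ => false].
Definition mon (T : {set 'I_N}) : 'X_{1..N} := [multinom ((i \in T) : nat) | i < N].

Lemma mdeg_mon T : mdeg (mon T) = #|T|.
Proof.
rewrite mdegE -sum1_card [RHS]big_mkcond /=; apply: eq_bigr => i _.
by rewrite /mon mnmE; case: (i \in T).
Qed.

Lemma poly_of d : (forall T : {set 'I_N}, (d <= #|T|)%N -> D T z0 = 0) ->
  exists p : {mpoly R[N]}, (msize p <= d)%N /\ agrees p f.
Proof.
move=> Hbig.
exists (\sum_(T : {set 'I_N} | (#|T| < d)%N) D T z0 *: 'X_[mon T]); split.
  apply: (leq_trans (msize_sum _ _ _)); apply/bigmax_leqP => T HT.
  by apply: (leq_trans (msizeZ_le _ _)); rewrite msizeX mdeg_mon.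
move=> x.
set v := (fun i => ((x i : nat)%:R : R)).
rewrite (big_morph (meval v) (@mevalD _ _ v) (@meval0 _ _ v)).
have Hev T : ('X_[mon T] : {mpoly R[N]}).@[v] = ((T \subset [set i | x i]) : nat)%:R.
  rewrite mevalX; case: (boolP (T \subset _)) => HT.
    rewrite big1 // => i _; rewrite mnmE /v.
    case: (boolP (i \in T)) => iT; last by rewrite expr0.
    by move: (subsetP HT i iT); rewrite inE => ->; rewrite expr1.
  have [i iT xi] : exists2 i, i \in T & ~~ x i.
    move: HT => /subsetPn [i iT]; rewrite inE => xi; by exists i.
  rewrite (bigD1 i) //= mnmE iT expr1 /v (negbTE xi) mul0r //.

under eq_bigr => T _ do rewrite mevalZ Hev.
rewrite big_mkcond /=.
rewrite (eq_bigr (fun T : {set 'I_N} => if T \subset [set i | x i] then D T z0 else 0)); last first.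
  move=> T _; case: ltnP => HT; last by rewrite Hbig //; case: ifP => _; rewrite ?mul0r.
  by case: (T \subset _); rewrite ?mulr1 ?mulr0.
rewrite -big_mkcond (@mobius _ _ erefl) //; last by move=> j _; rewrite ffunE.
by congr fr; apply/ffunP => i; rewrite !ffunE !inE; case: (x i).
Qed.

End Comb.


Lemma least_le (P : nat -> Prop) m : P m -> (least P <= m)%N.
Proof.
move=> Pm; rewrite /least.
case: excluded_middle_informative => [H|[]]; last first.
  exists m; rewrite /classical_pred; by case: excluded_middle_informative.
case: ex_minnP => k _; apply; rewrite /classical_pred.
by case: excluded_middle_informative.
Qed.

Section Game.
Variable N : nat.
Variable f : cube N -> bool.
Variable d : nat.
Variable e : 'I_d -> 'I_N.
Hypothesis e_inj : injective e.
Variable zi : cube N.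
Let F0 : {set 'I_N} := [set e c | c in setT].
Hypothesis HD : D f F0 zi != 0.

Definition pickbit (F : {set 'I_N}) (z : cube N) (j : 'I_N) :=
  D f (F :\ j) (upd z j true) != 0.
Definition step (st : {set 'I_N} * cube N) (c : 'I_d) :=
  (st.1 :\ e c, upd st.2 (e c) (pickbit st.1 st.2 (e c))).
Definition stf (p : seq 'I_d) := foldl step (F0, zi) p.

Lemma st_out q : forall st i, i \notin map e q -> (foldl step st q).2 i = st.2 i.
Proof.
elim: q => [//|c q IH] st i /=; rewrite inE negb_or => /andP[ic iq].
by rewrite IH //= ffunE (negbTE ic).
Qed.

Lemma step_inv (F : {set 'I_N}) z j : D f F z != 0 -> j \in F ->
  D f (F :\ j) (upd z j (pickbit F z j)) != 0.
Proof.
move=> DF jF; rewrite /pickbit.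
case: (eqVneq (D f (F :\ j) (upd z j true)) 0) => H /=; last by [].
by move: DF; rewrite (@D_split _ f F z j jF) H sub0r oppr_eq0.
Qed.

Lemma st_inv p : uniq p ->
  (stf p).1 = [set j in F0 | j \notin map e p] /\ D f (stf p).1 (stf p).2 != 0.
Proof.
elim/last_ind: p => [|p c IH].
  move=> _; split => //=; apply/setP => j; by rewrite !inE andbT.
rewrite rcons_uniq => /andP[cp up]; have [E1 E2] := IH up.
rewrite /stf foldl_rcons -/(stf p) /=.
have ecF : e c \in (stf p).1.
  by rewrite E1 inE (mem_map e_inj) cp andbT; apply/imsetP; exists c.
split; last exact: step_inv.
apply/setP => j; rewrite E1 !inE map_rcons mem_rcons inE negb_or.
by rewrite andbCA andbA.
Qed.


Definition Aw : alice_rule d :=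
  fun p => if p is c0 :: p' then (stf p).2 (e (last c0 p')) else false.

Lemma Aw_rcons p c : Aw (rcons p c) = (stf (rcons p c)).2 (e c).
Proof. by case: p => [|c1 p] //=; rewrite last_rcons. Qed.

Definition xv (v : cube d) : cube N :=
  [ffun j => if [pick c | e c == j] is Some c then v c else zi j].

Definition Bw : bob_rule d := fun v => [set c | f (flip (xv v) (e c)) != f (xv v)].

Section Perm.
Variable s : {perm 'I_d}.
Let str := stream s.

Lemma size_str : size str = d.
Proof. by rewrite /str /stream size_map size_enum_ord. Qed.

Lemma uniq_str : uniq str.
Proof. by rewrite /str /stream map_inj_uniq ?enum_uniq //; exact: perm_inj. Qed.

Lemma mem_str (c : 'I_d) : c \in str.
Proof.
by rewrite /str /stream -[c](permKV s) map_f // mem_enum.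
Qed.

Lemma nth_str (c0 : 'I_d) (i : 'I_d) : nth c0 str i = s i.
Proof.
rewrite /str /stream (nth_map i) ?nth_ord_enum //.
by rewrite size_enum_ord ltn_ord.
Qed.

Lemma array_early (b : bool) (c : 'I_d) : val ((s^-1)%g c) != d.-1 ->
  array Aw s b c = (stf (take d.-1 str)).2 (e c).
Proof.
move=> Hk; rewrite /array ffunE (negbTE Hk).
set k := val ((s^-1)%g c).
have kd : (k < d)%N by exact: ltn_ord.
have kd1 : (k.+1 <= d.-1)%N.
  by move: kd Hk; clear; move=> kd /eqP Hk; lia.
have Ht : take k.+1 str = rcons (take k str) c.
  by rewrite (take_nth c) ?size_str // (nth_str c ((s^-1)%g c)) permKV.
rewrite Ht Aw_rcons -Ht.
have Hnot : c \notin drop k.+1 (take d.-1 str).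
  have := take_uniq d.-1 uniq_str.
  rewrite -{1}(cat_take_drop k.+1 (take d.-1 str)) take_takel // cat_uniq.
  case/and3P => _ /hasPn H _; apply/negP => cin; move: (H c cin).
  by rewrite Ht mem_rcons inE eqxx.
rewrite -(cat_take_drop k.+1 (take d.-1 str)) take_takel // /stf foldl_cat.
by rewrite [RHS]st_out // (mem_map e_inj).
Qed.

Variable i : 'I_d.
Hypothesis Hi : val i = d.-1.
Let P := take d.-1 str.
Let zfin := (stf P).2.

Lemma str_split : rcons P (s i) = str.
Proof.
have id : (d.-1 < d)%N by rewrite -Hi ltn_ord.
rewrite /P -(nth_str (s i) i) Hi -take_nth ?size_str //.
by rewrite (@ltn_predK d.-1 d) ?take_oversize ?size_str.
Qed.

Lemma stf_last : (stf P).1 = [set e (s i)] /\ D f (stf P).1 zfin != 0.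
Proof.
have uP : uniq P by rewrite /P take_uniq // uniq_str.
have [E1 E2] := st_inv uP; split => //.
have := uniq_str; rewrite -str_split rcons_uniq => /andP[siP _].
rewrite E1; apply/setP => j; rewrite !inE.
case: (boolP (j \in F0)) => /= [/imsetP[c _ ->]|jF].
  rewrite (mem_map e_inj) (inj_eq e_inj).
  have := mem_str c; rewrite -str_split mem_rcons inE.
  case: (eqVneq c (s i)) => [->|_] //= ->; by [].
apply/esym/negbTE; apply: contraNneq jF => ->; apply/imsetP; by exists (s i).
Qed.

Lemma xv_arr b : xv (array Aw s b) = upd zfin (e (s i)) b.
Proof.
apply/ffunP => j; rewrite !ffunE.
case: pickP => [c /eqP <-|none].
  rewrite (inj_eq e_inj).
  case: (eqVneq (val ((s^-1)%g c)) d.-1) => [H|H].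
    have -> : c = s i by rewrite -[c](permKV s); congr (s _); apply/val_inj; rewrite H Hi.
    by rewrite /array ffunE permK Hi !eqxx.
  rewrite array_early //; case: (eqVneq c (s i)) => // Hc.
  by move: H; rewrite Hc permK Hi eqxx.
have -> : (j == e (s i)) = false by apply/negbTE; rewrite eq_sym; move: (none (s i)) => /= ->.
rewrite /zfin /stf st_out //; apply/mapP => -[c _ Hc].
by move: (none c); rewrite Hc eqxx.
Qed.

Lemma valid_at b : s i \in Bw (array Aw s b).
Proof.
rewrite /Bw inE xv_arr.
have [E1 E2] := stf_last; move: E2; rewrite E1 D1 -/zfin.
set j := e (s i).
have -> : flip (upd zfin j b) j = upd zfin j (~~ b).
  by apply/ffunP => k; rewrite !ffunE; case: (k == j).
rewrite /fr; case: b => /=; case: (f (upd zfin j true)); case: (f (upd zfin j false));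
  by rewrite ?subrr ?eqxx.
Qed.

End Perm.

Lemma Bw_card v : (#|Bw v| <= sensitivity f)%N.
Proof.
apply: (leq_trans _ (leq_bigmax (xv v))); rewrite /sens_at.
rewrite -(card_imset _ e_inj); apply: subset_leq_card.
apply/subsetP => j /imsetP[c]; rewrite !inE => H ->; exact: H.
Qed.

Lemma game_bound : (Cgame d <= sensitivity f)%N.
Proof.
apply: (@leq_trans (cost Aw Bw)).
  apply: least_le; exists Aw, Bw; split => //.
  move=> s b i Hi; exact: valid_at.
apply/bigmax_leqP => s _; apply/bigmax_leqP => b _; exact: Bw_card.
Qed.

End Game.


Lemma key N (f : cube N -> bool) (nonconst : exists x y : cube N, f x != f y) :
  exists (T : {set 'I_N}) (z : cube N), #|T| = degree f /\ D f T z != 0.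
Proof.
set d := degree f.
case: (boolP [exists T : {set 'I_N}, (d <= #|T|)%N && (D f T (z0 N) != 0)]).
  case/existsP => T /andP[dT DT].
  exact: (@reduce N f #|T| T (z0 N) d erefl dT DT).
rewrite negb_exists => /forallP H.
have H' : forall T : {set 'I_N}, (d <= #|T|)%N -> D f T (z0 N) = 0.
  move=> T dT; move: (H T); rewrite dT /= => /negPn /eqP //.
have [p [sp ag]] := poly_of H'.
exfalso; move: sp; case Hd : d => [|d'] sp.
  move: sp; rewrite leqn0 mmeasure_poly_eq0 => /eqP p0.
  have E : forall x, f x = false.
    move=> x; move: (ag x); rewrite p0 meval0; case: (f x) => //= /esym/eqP.
    by rewrite oner_eq0.
  by case: nonconst => x [y]; rewrite !E.
have : (degree f <= d')%N by apply: least_le; exists p; split.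
by rewrite -/d Hd ltnn.
Qed.

Theorem proposition1 (N : nat) (f : cube N -> bool)
  (nonconst : exists x y : cube N, f x != f y) :
  (Cgame (degree f) <= sensitivity f)%N.
Proof.
have [T [z [HT HD]]] := key nonconst.
set d := degree f in HT *.
pose e := fun c : 'I_d => enum_val (cast_ord (esym HT) c).
have e_inj : injective e.
  by move=> c1 c2 /enum_val_inj /cast_ord_inj.
have HF : [set e c | c in setT] = T.
  apply/setP => j; apply/imsetP/idP => [[c _ ->]|jT].
    exact: enum_valP.
  exists (cast_ord HT (enum_rank_in jT j)) => //.
  by rewrite /e cast_ordK enum_rankK_in.
apply: (@game_bound N f d e e_inj z); by rewrite HF.
Qed.
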